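(* Let $T$ be a tree of order at least $6$ in which the set $S'(T)$ of weak support vertices is a maximum $2$-packing. Then $T$ has no strong support vertex.
   Context: A leaf is a vertex of degree $1$; a weak support vertex is a vertex adjacent to exactly one leaf, and a strong support vertex is a vertex adjacent to at least two leaves. A $2$-packing is a set of vertices pairwise at distance at least $3$; a maximum $2$-packing is one of maximum cardinality. *)

(* Defs.v *)
From mathcomp Require Import all_boot.
Set Implicit Arguments. Unset Strict Implicit. Unset Printing Implicit Defensive.

Section Graphs.
Variable T : finType.
Variable e : rel T.

Definition simple_graph : Prop := symmetric e /\ irreflexive e.

Definition connected_graph : Prop := forall x y : T, connect e x y.

(* acyclic: every cycle of pairwise distinct vertices has at most 2 vertices
   (a 2-vertex "cycle" [:: a; b] is just an edge traversed back and forth) *)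
Definition acyclic_graph : Prop := forall c : seq T, ucycle e c -> size c <= 2.

Definition is_tree : Prop := simple_graph /\ connected_graph /\ acyclic_graph.

Definition nbhd (x : T) : {set T} := [set y | e x y].
Definition deg (x : T) : nat := #|nbhd x|.
Definition leaf (x : T) : bool := deg x == 1.

Definition nleaves (x : T) : nat := #|[set y | e x y & leaf y]|.
Definition weak_support (x : T) : bool := nleaves x == 1.
Definition strong_support (x : T) : bool := 2 <= nleaves x.

Definition weak_supports : {set T} := [set x | weak_support x].

(* 2-packing: distinct vertices are at distance >= 3, i.e. neither adjacent
   nor sharing a common neighbour *)
Definition two_packing (S : {set T}) : Prop :=
  forall x y, x \in S -> y \in S -> x != y ->
    ~~ e x y /\ (forall z, ~~ (e x z && e z y)).

Definition max_two_packing (S : {set T}) : Prop :=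
  two_packing S /\ forall P : {set T}, two_packing P -> #|P| <= #|S|.

End Graphs.

(* Main.v *)
Require Import Defs.
From mathcomp Require Import all_boot.
Set Implicit Arguments.
Unset Strict Implicit.

Section Aux.
Variable T : finType.
Variable e : rel T.

Definition far (a s : T) := ~~ e a s /\ (forall z, ~~ (e a z && e z s)).

Lemma far_sym a b : symmetric e -> far a b -> far b a.
Proof.
move=> sym [h1 h2]; split; first by rewrite sym.
move=> z; rewrite [e b z]sym [e z a]sym andbC; exact: h2.
Qed.

Lemma add_pack S a : symmetric e -> two_packing e S ->
  (forall s, s \in S -> s != a -> far a s) -> two_packing e (a |: S).
Proof.
move=> sym pS H x y; rewrite !in_setU1 => /predU1P[->|xS] /predU1P[->|yS] nxy.
- by rewrite eqxx in nxy.
- by have := H y yS; rewrite eq_sym => /(_ nxy).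
- exact: far_sym (H x xS nxy).
- exact: pS.
Qed.

Lemma leaf_nb y a b : leaf e y -> e y a -> e y b -> a = b.
Proof.
rewrite /leaf /deg => /cards1P[v hv] ha hb.
have: a \in nbhd e y by rewrite inE.
have: b \in nbhd e y by rewrite inE.
by rewrite hv !inE => /eqP-> /eqP->.
Qed.

Lemma pack_far S a b : two_packing e S -> a \in S -> b \in S -> a != b -> far a b.
Proof. by move=> pS aS bS nab; have [h1 h2] := pS a b aS bS nab; split. Qed.

End Aux.

Theorem claim1 (T : finType) (e : rel T) :
  is_tree e -> 6 <= #|T| -> max_two_packing e (weak_supports e) ->
  forall x : T, ~~ strong_support e x.
Proof.
move=> [[sym irr] _] _ [pW maxW] x; apply/negP => sx.
set W := weak_supports e.
have xW : x \notin W.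
  by rewrite inE /weak_support; move: sx; rewrite /strong_support; case: (nleaves e x) => [|[|]].
have degx : 2 <= deg e x.
  apply: leq_trans sx _; apply: subset_leq_card; apply/subsetP => y.
  by rewrite !inE => /andP[].
have xnl : ~~ leaf e x by rewrite /leaf; move: degx; case: (deg e x) => [|[|]].
have [l1 hl1] : exists l1, l1 \in [set y | e x y & leaf e y].
  apply/set0Pn; rewrite -card_gt0; apply: leq_trans sx; done.
move: hl1; rewrite inE => /andP[xl1 ll1].
have l1x : e l1 x by rewrite sym.
have l1only : forall z, e l1 z -> z = x by move=> z hz; exact: leaf_nb ll1 hz l1x.
case: (pickP [pred w | (w \in W) && e x w]) => [w /andP[wW xw] | none].
-
  have [u hu] : exists u, [set y | e w y & leaf e y] = [set u].
    by move: wW; rewrite inE /weak_support /nleaves => /cards1P.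
  have : u \in [set y | e w y & leaf e y] by rewrite hu inE.
  rewrite inE => /andP[wu lu].
  have uonly : forall z, e u z -> z = w by move=> z hz; apply: leaf_nb lu hz _; rewrite sym.
  have wx : e w x by rewrite sym.
  have wl1 : w != l1.
    apply/eqP => ewl; subst w. by move: xnl; rewrite -(l1only u wu) lu.
  have sfar : forall s, s \in W -> s != w -> far e w s.
    by move=> s sW nsw; apply: pack_far pW wW sW _; rewrite eq_sym.
  set P := u |: (l1 |: (W :\ w)).
  have l1nW : l1 \notin W :\ w.
    rewrite in_setD1 eq_sym wl1 /=; apply/negP => l1W.
    have l1w : l1 != w by rewrite eq_sym.
    by have [_ /(_ x)] := sfar l1 l1W l1w; rewrite wx xl1.
  have unP : u \notin l1 |: (W :\ w).
    rewrite !(in_setU1, in_setD1) negb_or; apply/andP; split.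
      apply/eqP => eul; subst u. have lw : e l1 w by rewrite sym. by move: xW; rewrite -(l1only w lw) wW.
    apply/negP => /andP[nuw uW]; have [] := sfar u uW nuw; by rewrite wu.
  have pP : two_packing e P.
    apply: add_pack => //.
      apply: add_pack => //.
        by move=> a b; rewrite !(in_setU1, in_setD1) => /andP[_ aW] /andP[_ bW]; apply: pW.
      move=> s; rewrite !(in_setU1, in_setD1) => /andP[nsw sW] _; split.
        by apply/negP => /l1only esx; subst s; rewrite sW in xW.
      move=> z; apply/negP => /andP[/l1only ezx]; subst z => xs.
      by have [_ /(_ x)] := sfar s sW nsw; rewrite wx xs.
    move=> s; rewrite !(in_setU1, in_setD1) => sP nsu; split.
      apply/negP => /uonly esw; subst s; case/predU1P: sP => [ewl|/andP[]].
        by rewrite ewl eqxx in wl1.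
      by rewrite eqxx.
    move=> z; apply/negP => /andP[/uonly ezw]; subst z => ws.
    case/predU1P: sP => [esl|/andP[nsw sW]].
      subst s; have lw : e l1 w by rewrite sym.
      by move: xW; rewrite -(l1only w lw) wW.
    by have [] := sfar s sW nsw; rewrite ws.
  have := maxW P pP.
  rewrite /P cardsU1 unP cardsU1 l1nW /= (cardsD1 w W) wW.
  by rewrite !add1n ltnn.
-
  have pP : two_packing e (l1 |: W).
    apply: add_pack => // s sW _; split.
      by apply/negP => /l1only esx; subst s; rewrite sW in xW.
    move=> z; apply/negP => /andP[/l1only ezx]; subst z => xs.
    by have := none s; rewrite /= sW xs.
  have l1W : l1 \notin W by apply/negP => l1W; have := none l1; rewrite /= l1W xl1.
  by have := maxW _ pP; rewrite cardsU1 l1W ltnn.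
Qed.
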